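(* For any weighted finite graph $G$ with $N$ vertices and each $1\leq k\leq N$, \[ \lambda_{N-k+1}\geq 2\overline{h}^*(k). \]
   Context: $G=(V,E,w)$ is a finite undirected graph without self-loops, $N=|V|$, positive symmetric edge weights $w_{uv}$ ($w_{uv}=0$ for non-edges), degrees $d_u=\sum_v w_{uv}$ (implicitly positive). $|E(A,B)|:=\sum_{u\in A,v\in B}w_{uv}$, $\mathrm{vol}(A):=\sum_{u\in A}d_u$. The normalized Laplacian $\Delta f(u)=\frac{1}{d_u}\sum_v w_{uv}(f(u)-f(v))$ has eigenvalues (with multiplicity) $0=\lambda_1\leq\cdots\leq\lambda_N\leq 2$. A $k$-sub-bipartition is a collection of $k$ pairs $(V_1,V_2),\ldots,(V_{2k-1},V_{2k})$ of pairwise disjoint subsets of $V$ with $V_{2i-1}\cup V_{2i}\neq\emptyset$ for each $i$; for it set $V^*:=V\setminus\bigcup_{i=1}^k(V_{2i-1}\cup V_{2i})$. Define \[ \overline{h}^*(k):=\max\min_{1\leq i\leq k}\frac{2|E(V_{2i-1},V_{2i})|+\frac12|E(V_{2i-1}\cup V_{2i},V^* )|}{\mathrm{vol}(V_{2i-1}\cup V_{2i})}, \] the maximum over all $k$-sub-bipartitions. *)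

(* Defs.v *)
From mathcomp Require Import all_boot all_order all_algebra.
From mathcomp Require Import reals.
Set Implicit Arguments. Unset Strict Implicit. Unset Printing Implicit Defensive.
Import Order.TTheory GRing.Theory Num.Theory.
Local Open Scope ring_scope.

Section WeightedGraph.
Variables (R : realType) (V : finType) (w : V -> V -> R).

Definition deg (u : V) : R := \sum_(v : V) w u v.

Definition Ew (A B : {set V}) : R := \sum_(u in A) \sum_(v in B) w u v.

Definition vol (A : {set V}) : R := \sum_(u in A) deg u.

(* Matrix of the normalized Laplacian Delta = I - D^{-1} W, in the basis of
   vertices enumerated by enum_val : 'I_#|V| -> V. *)
Definition nLap : 'M[R]_#|V| :=
  \matrix_(i, j) (((i == j)%:R) - w (enum_val i) (enum_val j) / deg (enum_val i)).

(* s is the nondecreasing list lambda_1 <= ... <= lambda_N of the eigenvalues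
   of Delta, with multiplicity (roots of the characteristic polynomial). *)
Definition eigenvalues_sorted (s : seq R) : Prop :=
  [/\ size s = #|V|, sorted <=%R s &
      char_poly nLap = \prod_(x <- s) ('X - x%:P)].

(* A k-sub-bipartition: pairs (V_{2i-1}, V_{2i}) = P i. *)
Definition sub_bipartition (k : nat) (P : {ffun 'I_k -> {set V} * {set V}}) : bool :=
  [forall i, [disjoint (P i).1 & (P i).2]] &&
  [forall i, [forall j, (i != j) ==>
      [disjoint ((P i).1 :|: (P i).2) & ((P j).1 :|: (P j).2)]]] &&
  [forall i, (P i).1 :|: (P i).2 != set0].

Definition Vstar (k : nat) (P : {ffun 'I_k -> {set V} * {set V}}) : {set V} :=
  ~: \bigcup_(i < k) ((P i).1 :|: (P i).2).

Definition bip_ratio (k : nat) (P : {ffun 'I_k -> {set V} * {set V}}) (i : 'I_k) : R :=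
  (2 * Ew (P i).1 (P i).2 + 2^-1 * Ew ((P i).1 :|: (P i).2) (Vstar P))
    / vol ((P i).1 :|: (P i).2).

End WeightedGraph.

Definition seqmin (R : realType) (s : seq R) : R := foldr Num.min (head 0 s) s.
Definition seqmax (R : realType) (s : seq R) : R := foldr Num.max (head 0 s) s.

Definition bip_value (R : realType) (V : finType) (w : V -> V -> R) (k : nat)
  (P : {ffun 'I_k -> {set V} * {set V}}) : R :=
  seqmin [seq bip_ratio w P i | i <- enum 'I_k].

Definition hstar (R : realType) (V : finType) (w : V -> V -> R) (k : nat) : R :=
  seqmax [seq bip_value w P | P <- enum [pred P : {ffun 'I_k -> {set V} * {set V}}
                                          | sub_bipartition P]].

(* Main.v *)
Require Import Defs.
From mathcomp Require Import all_boot all_order all_algebra.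
From mathcomp Require Import sesquilinear spectral zify ring lra.
From mathcomp Require Import reals.
From mathcomp.real_closed Require Import complex.
Set Implicit Arguments. Unset Strict Implicit. Unset Printing Implicit Defensive.
Import Order.TTheory GRing.Theory Num.Theory.
Local Open Scope ring_scope.
Local Open Scope sesquilinear_scope.

Lemma quad_diag (C : numClosedFieldType) n (z : 'rV[C]_n) (d : 'rV[C]_n) :
  (z *m diag_mx d *m z ^t*) 0 0 = \sum_j z 0 j * d 0 j * (z 0 j)^*.
Proof.
rewrite mul_mx_diag !mxE; apply: eq_bigr => j _; rewrite !mxE //.
Qed.

Lemma quad_id (C : numClosedFieldType) n (z : 'rV[C]_n) :
  (z *m z ^t*) 0 0 = \sum_j z 0 j * (z 0 j)^*.
Proof.
rewrite !mxE; apply: eq_bigr => j _; rewrite !mxE //.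
Qed.

Lemma specA (C : numClosedFieldType) n k (M : 'M[C]_n) (G : 'M[C]_(k,n)) (c : C) :
  M \is normalmx -> row_free G ->
  (forall a : 'rV_k, c * ((a *m G) *m (a *m G) ^t*) 0 0
                    <= ((a *m G) *m M *m (a *m G) ^t*) 0 0) ->
  (k + #|[set j | ((spectral_diag M) ord0 j < c)%R]| <= n)%N.
Proof.
move=> /orthomx_spectralP HM Gfree Hq.
set X := spectral_diag M in HM *.
set P := spectralmx M in HM.
have Pu : P \is unitarymx by exact: spectral_unitarymx.
rewrite invmx_unitary // in HM.
set S := [set j | (X ord0 j < c)%R].
rewrite leqNgt; apply/negP => Hlt.
have HSc : (#|~: S| < k)%N.
  by move: Hlt; have := cardsC S; rewrite card_ord; lia.
pose E : 'M[C]_(n, #|~: S|) := \matrix_(j, l) ((j == enum_val l)%:R).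
pose K := G *m P ^t* *m E.
have nfree : ~~ row_free K.
  by rewrite -row_leq_rank -ltnNge (leq_ltn_trans (rank_leq_col K)).
pose a := nz_row (kermx K).
have a0 : a != 0 by rewrite nz_row_eq0 kermx_eq0.
have aK : a *m K = 0 by apply/eqP; rewrite -sub_kermx nz_row_sub.
pose y := a *m G.
have y0 : y != 0 by rewrite /y mulmx_free_eq0.
pose z := y *m P ^t*.
have yz : y = z *m P by rewrite /z mulmxKtV.
have zS : forall j, j \notin S -> z 0 j = 0.
  move=> j jS.
  have jSc : j \in ~: S by rewrite inE.
  have zE : forall (u : 'rV_n) l, (u *m E) ord0 l = u ord0 (enum_val l).
    clear; move=> u l; rewrite mxE (bigD1 (enum_val l)) //= /E !mxE eqxx mulr1.
    rewrite big1 ?addr0 // => i il; rewrite mxE (negbTE il) mulr0 //.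
  have := congr1 (fun A : 'rV[C]_#|~: S| => A ord0 (enum_rank_in jSc j)) aK.
  rewrite /K !mulmxA -/y -/z zE enum_rankK_in //; by move=> ->; rewrite mxE.
have z0 : z != 0.
  by apply: contraNneq y0 => zz; rewrite yz zz mul0mx.
have yt : y ^t* = P ^t* *m z ^t* by rewrite yz trmx_mul map_mxM.
have PP : P *m P ^t* = 1%:M by apply/unitarymxP.
have := Hq a; rewrite -/y.
rewrite yt HM yz !mulmxA.
rewrite -[z *m P *m P ^t*]mulmxA PP mulmx1.
rewrite -[z *m diag_mx X *m P *m P^t*]mulmxA PP mulmx1.
rewrite quad_diag quad_id mulr_sumr.
apply/negP; rewrite lt_geF //.
have [j zj] : exists j, z 0 j != 0.
  apply/existsP; rewrite -negb_forall; apply: contra z0 => /forallP H.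
  by apply/eqP/rowP => j; rewrite [in RHS]mxE; apply/eqP; exact: H.
have jS : j \in S by apply: contraNT zj => /zS ->; rewrite eqxx.
rewrite -subr_gt0 -sumrB (bigD1 j) //=.
have pos : forall i, 0 <= c * (z 0 i * (z 0 i)^*) - z 0 i * X 0 i * (z 0 i)^*.
  move=> i; have [iS|iS] := boolP (i \in S).
    rewrite mulrAC [c * _]mulrC -mulrBr mulr_ge0 ?mul_conjC_ge0 //.
    by rewrite subr_ge0 ltW //; move: iS; rewrite inE.
  by rewrite zS // !mul0r mulr0 subrr.
apply: ltr_pwDl; last by apply: sumr_ge0 => i _; apply: pos.
rewrite mulrAC [c * _]mulrC -mulrBr mulr_gt0 ?mul_conjC_gt0 //.
by rewrite subr_gt0; move: jS; rewrite inE.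
Qed.
Lemma char_poly_conj (F : comNzRingType) n (Q P A : 'M[F]_n) :
  Q *m P = 1%:M -> char_poly (Q *m A *m P) = char_poly A.
Proof.
move=> QP.
have QP' : map_mx polyC Q *m map_mx polyC P = 1%:M by rewrite -map_mxM QP map_mx1.
rewrite /char_poly.
have -> : char_poly_mx (Q *m A *m P) =
   map_mx polyC Q *m char_poly_mx A *m map_mx polyC P.
  rewrite /char_poly_mx mulmxBr mulmxBl -!map_mxM.
  by rewrite mul_mx_scalar -scalemxAl QP' scalemx1.
by rewrite !det_mulmx mulrAC -det_mulmx QP' det1 mul1r.
Qed.


Section Main.
Variables (R : realType) (V : finType) (w : V -> V -> R).
Hypothesis w_sym : forall u v, w u v = w v u.
Hypothesis w_ge0 : forall u v, 0 <= w u v.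
Hypothesis deg_pos : forall u, 0 < deg w u.

Local Notation n := #|V|.
Local Notation ev := (@enum_val V (mem predT)).
Local Notation f := (real_complex R).

Definition sq (u : V) : R := Num.sqrt (deg w u).

Definition B0 : 'M[R]_n :=
  \matrix_(i, j) ((i == j)%:R - w (ev i) (ev j) / (sq (ev i) * sq (ev j))).

Lemma sq_neq0 u : sq u != 0.
Proof. by rewrite /sq gt_eqF // sqrtr_gt0. Qed.

Lemma sq2 u : sq u * sq u = deg w u.
Proof. by rewrite /sq -expr2 sqr_sqrtr // ltW. Qed.

Lemma B0_char : char_poly B0 = char_poly (nLap w).
Proof using w_sym w_ge0 deg_pos.
pose Dh : 'M[R]_n := diag_mx (\row_i sq (ev i)).
pose Dhi : 'M[R]_n := diag_mx (\row_i (sq (ev i))^-1).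
have -> : B0 = Dh *m nLap w *m Dhi.
  apply/matrixP => i j; rewrite mul_mx_diag mul_diag_mx !mxE.
  have := sq_neq0 (ev i); have := sq_neq0 (ev j); have := sq2 (ev i).
  case: (eqVneq i j) => [->|ij] /= h2 h1 h3.
    by rewrite -h2; field.
  by rewrite -h2; field; rewrite h1 h3.
rewrite char_poly_conj // mulmx_diag; apply/matrixP => i j; rewrite !mxE.
case: (eqVneq i j) => [->|ij]; last by [].
by rewrite mulfV ?sq_neq0.
Qed.

Definition Mc : 'M[R[i]]_n := map_mx f B0.

Lemma fconj (x : R) : (f x)^* = f x.
Proof. by apply: conj_Creal; rewrite complex_real. Qed.

Lemma Mc_normal : Mc \is normalmx.
Proof using w_sym w_ge0 deg_pos.
have Mt : Mc ^t* = Mc.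
  apply/matrixP => i j; rewrite !mxE fconj; congr (f _).
  by rewrite [j == i]eq_sym [w (ev j) _]w_sym [sq (ev j) * _]mulrC.
by apply/normalmxP; rewrite Mt.
Qed.

Variable k : nat.
Variable P : {ffun 'I_k -> {set V} * {set V}}.
Hypothesis hP : sub_bipartition P.

Definition sigma (i : 'I_k) (u : V) : R := (u \in (P i).1)%:R - (u \in (P i).2)%:R.

Definition Gm : 'M[R[i]]_(k, n) := \matrix_(i, j) f (sigma i (ev j) * sq (ev j)).

Definition Sb (i : 'I_k) := (P i).1 :|: (P i).2.

Lemma hP1 i : [disjoint (P i).1 & (P i).2].
Proof. by move: hP => /andP[/andP[/forallP H _] _]; apply: H. Qed.

Lemma hP2 i j : i != j -> [disjoint Sb i & Sb j].
Proof. by move: hP => /andP[/andP[_ /forallP H] _] ij; move: (H i) => /forallP /(_ j) /implyP; apply. Qed.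

Lemma hP3 i : Sb i != set0.
Proof. by move: hP => /andP[_ /forallP H]; apply: H. Qed.

Lemma Sb_uniq i l u : u \in Sb i -> u \in Sb l -> i = l.
Proof.
move=> ui ul; apply/eqP; apply: contraT => il.
by move: (hP2 il) => /disjointFr /(_ ui); rewrite ul.
Qed.

Lemma sigma_out i u : u \notin Sb i -> sigma i u = 0.
Proof. by rewrite /Sb inE negb_or /sigma => /andP[/negbTE -> /negbTE ->]; rewrite subrr. Qed.

Lemma sigma_sq i u : u \in Sb i -> sigma i u * sigma i u = 1.
Proof.
rewrite /Sb inE /sigma => /orP[u1|u2].
  by rewrite u1 (disjointFr (hP1 i) u1) subr0 mulr1.
by rewrite u2 (disjointFl (hP1 i) u2) sub0r mulrNN mulr1.
Qed.

Lemma Gm_free : row_free Gm.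
Proof using w_sym w_ge0 deg_pos hP.
apply: inj_row_free => v vG; apply/rowP => i; rewrite mxE.
have /set0Pn [u ui] := hP3 i.
have := congr1 (fun A : 'rV_n => A ord0 (enum_rank u)) vG.
rewrite !mxE (bigD1 i) //= big1 ?addr0; last first.
  move=> l li; rewrite mxE enum_rankK sigma_out ?mul0r ?rmorph0 ?mulr0 //.
  by apply: contra li => ul; apply/eqP/(Sb_uniq ul ui).
rewrite mxE enum_rankK => /eqP; rewrite mulf_eq0 => /orP[/eqP //|].
rewrite fmorph_eq0 mulf_eq0 => /orP[/eqP h|].
  by move: (sigma_sq ui); rewrite h mul0r => /eqP; rewrite eq_sym oner_eq0.
by rewrite (negbTE (sq_neq0 u)).
Qed.

Definition hv (a : 'rV[R[i]]_k) (u : V) : R[i] := \sum_i a 0 i * f (sigma i u).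

Lemma tcE (C : numClosedFieldType) m (y : 'rV[C]_m) j : (y ^t*) j 0 = (y 0 j)^*.
Proof. by rewrite !mxE. Qed.

Lemma sum_ev (F : V -> R[i]) : \sum_(j < n) F (ev j) = \sum_u F u.
Proof.
rewrite [RHS](reindex ev) //; exists enum_rank => x _; [exact: enum_valK | exact: enum_rankK].
Qed.

Lemma yE (a : 'rV[R[i]]_k) j : (a *m Gm) 0 j = hv a (ev j) * f (sq (ev j)).
Proof.
rewrite !mxE /hv mulr_suml; apply: eq_bigr => i _; rewrite !mxE rmorphM mulrA //.
Qed.

Lemma quad1 (a : 'rV[R[i]]_k) :
  ((a *m Gm) *m (a *m Gm) ^t*) 0 0 = \sum_u hv a u * (hv a u)^* * f (deg w u).
Proof using w_sym w_ge0 deg_pos hP.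
rewrite mxE -sum_ev; apply: eq_bigr => j _; rewrite tcE yE (rmorphM Num.conj_op) /= fconj.
by rewrite -(sq2 (ev j)) rmorphM; ring.
Qed.

Lemma quadM (a : 'rV[R[i]]_k) :
  ((a *m Gm) *m Mc *m (a *m Gm) ^t*) 0 0 =
  \sum_u hv a u * (hv a u)^* * f (deg w u)
   - \sum_u \sum_v hv a u * (hv a v)^* * f (w u v).
Proof using w_sym w_ge0 deg_pos hP.
have term : forall j l, (a *m Gm) 0 j * Mc j l * ((a *m Gm) ^t*) l 0 =
   hv a (ev j) * (hv a (ev l))^* * ((j == l)%:R * f (deg w (ev j)) - f (w (ev j) (ev l))).
  move=> j l.
  have hr : sq (ev j) * B0 j l * sq (ev l) = (j == l)%:R * deg w (ev j) - w (ev j) (ev l).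
    rewrite mxE; have := sq_neq0 (ev j); have := sq_neq0 (ev l); have := sq2 (ev j).
    case: (eqVneq j l) => [->|jl] /= h2 h1 h3.
      by rewrite -h2; field.
    by field; rewrite h1 h3.
  rewrite tcE yE yE (rmorphM Num.conj_op) /= fconj mxE.
  rewrite -(rmorph_nat f) -rmorphM -rmorphB -hr !rmorphM; ring.
have e1 : \sum_u hv a u * (hv a u)^* * f (deg w u) =
    \sum_j \sum_l hv a (ev j) * (hv a (ev l))^* * ((j == l)%:R * f (deg w (ev j))).
  rewrite -sum_ev; apply: eq_bigr => j _; rewrite (bigD1 j) //= big1 ?addr0.
    by rewrite eqxx mul1r.
  by move=> l lj; rewrite eq_sym (negbTE lj) mul0r mulr0.
have e2 : \sum_u \sum_v hv a u * (hv a v)^* * f (w u v) =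
    \sum_j \sum_l hv a (ev j) * (hv a (ev l))^* * f (w (ev j) (ev l)).
  rewrite -sum_ev; apply: eq_bigr => j _.
  by rewrite -(sum_ev (fun v => hv a (ev j) * (hv a v)^* * f (w (ev j) v))).
rewrite e1 e2 -sumrB mxE.
under eq_bigr => l _ do rewrite mxE mulr_suml.
rewrite exchange_big /=; apply: eq_bigr => j _; rewrite -sumrB; apply: eq_bigr => l _.
by rewrite term mulrBr.
Qed.

Definition Vs := Vstar P.

Lemma Vs_P u : (u \in Vs) = [forall i, u \notin Sb i].
Proof.
rewrite /Vs /Vstar in_setC; apply/idP/forallP => [H i | H].
  by apply: contra H => ui; apply/bigcupP; exists i.
by apply/bigcupP => -[i _ ui]; move: (H i); rewrite /Sb ui.
Qed.

Lemma Vs_notin u i : u \in Vs -> u \notin Sb i.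
Proof. by rewrite Vs_P => /forallP. Qed.

Lemma Sb_notVs u i : u \in Sb i -> u \notin Vs.
Proof. by move=> ui; apply/negP => /(Vs_notin i); rewrite ui. Qed.

Lemma notVs u : u \notin Vs -> exists i, u \in Sb i.
Proof. by rewrite Vs_P negb_forall; case/existsP => i; rewrite negbK => ui; exists i. Qed.

Lemma Sb1 i u : u \in (P i).1 -> u \in Sb i.
Proof. by rewrite /Sb inE => ->. Qed.
Lemma Sb2 i u : u \in (P i).2 -> u \in Sb i.
Proof. by rewrite /Sb inE => ->; rewrite orbT. Qed.
Lemma nSb1 i u : u \notin Sb i -> u \notin (P i).1.
Proof. by apply: contra; apply: Sb1. Qed.
Lemma nSb2 i u : u \notin Sb i -> u \notin (P i).2.
Proof. by apply: contra; apply: Sb2. Qed.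

Lemma hv_in (a : 'rV[R[i]]_k) i u : u \in Sb i -> hv a u = a 0 i * f (sigma i u).
Proof.
move=> ui; rewrite /hv (bigD1 i) //= big1 ?addr0 // => l li.
rewrite sigma_out ?rmorph0 ?mulr0 //; apply: contra li => ul.
by apply/eqP; apply: (Sb_uniq ul ui).
Qed.

Lemma hv_out (a : 'rV[R[i]]_k) u : u \in Vs -> hv a u = 0.
Proof.
move=> uV; rewrite /hv big1 // => i _.
by rewrite sigma_out ?rmorph0 ?mulr0 // Vs_notin.
Qed.

Definition psi i u v : R :=
  4 * ((u \in (P i).1)%:R * (v \in (P i).2)%:R + (u \in (P i).2)%:R * (v \in (P i).1)%:R)
  + (u \in Sb i)%:R * (v \in Vs)%:R + (u \in Vs)%:R * (v \in Sb i)%:R.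

Definition Nc (x : R[i]) := x * x^*.

Lemma Nc_ge0 x : 0 <= Nc x.
Proof. exact: mul_conjC_ge0. Qed.

Lemma Nc_sigma (a : R[i]) i u : u \in Sb i -> Nc (a * f (sigma i u)) = Nc a.
Proof.
move=> ui; rewrite /Nc (rmorphM Num.conj_op) /= fconj.
by rewrite mulrACA -rmorphM sigma_sq // rmorph1 mulr1.
Qed.

Lemma psi_out i u v : u \notin Sb i -> u \notin Vs -> psi i u v = 0.
Proof.
move=> ui uV; rewrite /psi (negbTE (nSb1 ui)) (negbTE (nSb2 ui)) (negbTE ui) (negbTE uV).
by rewrite !mul0r !addr0 mulr0.
Qed.

Lemma psi_out2 i u v : u \notin Sb i -> v \notin Sb i -> psi i u v = 0.
Proof.
move=> ui vi; rewrite /psi (negbTE (nSb1 ui)) (negbTE (nSb2 ui)) (negbTE ui) (negbTE vi).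
by rewrite !mul0r !mulr0 !addr0 mulr0.
Qed.

Lemma bool_ineq (p q r t : bool) : ~~ (p && q) -> ~~ (r && t) ->
  4 * ((p%:R : R) * t%:R + q%:R * r%:R) <= (p%:R - q%:R - (r%:R - t%:R)) ^+ 2.
Proof. by case: p; case: q; case: r; case: t => //= _ _; rewrite ?mulr1n ?mulr0n; lra. Qed.

Lemma nand_disj i u : ~~ ((u \in (P i).1) && (u \in (P i).2)).
Proof. by apply/negP => /andP[u1 u2]; move: (disjointFr (hP1 i) u1); rewrite u2. Qed.

Lemma pw (a : 'rV[R[i]]_k) u v : \sum_i Nc (a 0 i) * f (psi i u v) <= Nc (hv a u - hv a v).
Proof.
have [uV|uV] := boolP (u \in Vs).
  rewrite hv_out // sub0r.
  have [vV|vV] := boolP (v \in Vs).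
    rewrite hv_out // oppr0 /Nc mul0r big1 // => i _.
    by rewrite psi_out2 ?rmorph0 ?mulr0 // Vs_notin.
  have [i1 vi1] := notVs vV.
  rewrite (bigD1 i1) //= big1 ?addr0; last first.
    move=> i ii1; rewrite psi_out2 ?rmorph0 ?mulr0 //; first exact: Vs_notin.
    by apply: contra ii1 => vi; apply/eqP/(Sb_uniq vi vi1).
  rewrite (hv_in a vi1) /Nc rmorphN /= mulNr mulrN opprK.
  rewrite -[X in _ <= X]/(Nc (a 0 i1 * f (sigma i1 v))) Nc_sigma // /Nc.
  rewrite /psi (negbTE (nSb1 (Vs_notin i1 uV))) (negbTE (nSb2 (Vs_notin i1 uV))).
  by rewrite (negbTE (Vs_notin i1 uV)) uV vi1 /= ?(mulr0n, mulr1n, mul0r, mulr0, add0r, addr0, mul1r, mulr1, rmorph1, rmorph0).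
have [i0 ui0] := notVs uV.
rewrite (bigD1 i0) //= big1 ?addr0; last first.
  move=> i ii0; rewrite psi_out ?rmorph0 ?mulr0 //.
  by apply: contra ii0 => ui; apply/eqP/(Sb_uniq ui ui0).
rewrite (hv_in a ui0).
have [vV|vV] := boolP (v \in Vs).
  rewrite hv_out // subr0 Nc_sigma //.
  rewrite /psi (negbTE (nSb1 (Vs_notin i0 vV))) (negbTE (nSb2 (Vs_notin i0 vV))).
  by rewrite (negbTE (Vs_notin i0 vV)) (negbTE uV) vV ui0 /= ?(mulr0n, mulr1n, mul0r, mulr0, add0r, addr0, mul1r, mulr1, rmorph1, rmorph0).
have [i1 vi1] := notVs vV.
have [e|ne] := eqVneq i1 i0.
  rewrite e in vi1; rewrite (hv_in a vi1) -mulrBr -rmorphB.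
  rewrite /Nc (rmorphM Num.conj_op) /= fconj mulrACA -rmorphM -/(Nc _).
  apply: ler_wpM2l; first exact: Nc_ge0.
  rewrite lecR /psi (negbTE uV) (negbTE vV) /= ?(mulr0n, mulr1n, mul0r, mulr0, add0r, addr0, mul1r, mulr1, rmorph1, rmorph0) -expr2.
  by apply: bool_ineq; apply: nand_disj.
have vi0 : v \notin Sb i0 by apply: contra ne => vi0; apply/eqP/(Sb_uniq vi1 vi0).
rewrite /psi (negbTE (nSb1 vi0)) (negbTE (nSb2 vi0)) (negbTE vi0) (negbTE vV).
by rewrite /= ?(mulr0n, mulr1n, mul0r, mulr0, add0r, addr0, mul1r, mulr1, rmorph1, rmorph0) Nc_ge0.
Qed.

Lemma Ew_ind (A B : {set V}) :
  \sum_u \sum_v w u v * ((u \in A)%:R * (v \in B)%:R) = Ew w A B.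
Proof.
rewrite /Ew [RHS]big_mkcond; apply: eq_bigr => u _.
case: (u \in A) => /=.
  rewrite [RHS]big_mkcond; apply: eq_bigr => v _.
  by case: (v \in B); rewrite /= ?mulr1n ?mulr0n ?mul1r ?mulr1 ?mulr0.
by rewrite big1 // => v _; rewrite mulr0n mul0r mulr0.
Qed.

Lemma Ew_sym (A B : {set V}) : Ew w A B = Ew w B A.
Proof.
rewrite /Ew exchange_big /=; apply: eq_bigr => v _; apply: eq_bigr => u _.
exact: w_sym.
Qed.

Lemma vol_ind (S : {set V}) : \sum_u (u \in S)%:R * deg w u = vol w S.
Proof.
rewrite /vol [RHS]big_mkcond; apply: eq_bigr => u _.
by case: (u \in S); rewrite /= ?mulr1n ?mulr0n ?mul1r ?mul0r.
Qed.

Lemma sum_psi i : \sum_u \sum_v w u v * psi i u v =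
  2 * (4 * Ew w (P i).1 (P i).2 + Ew w (Sb i) Vs).
Proof.
have e : forall u v, w u v * psi i u v =
   4 * (w u v * ((u \in (P i).1)%:R * (v \in (P i).2)%:R))
 + 4 * (w u v * ((u \in (P i).2)%:R * (v \in (P i).1)%:R))
 + w u v * ((u \in Sb i)%:R * (v \in Vs)%:R)
 + w u v * ((u \in Vs)%:R * (v \in Sb i)%:R).
  by move=> u v; rewrite /psi; ring.
under eq_bigr => u _ do rewrite (eq_bigr _ (fun v _ => e u v)) !big_split /= -!mulr_sumr.
rewrite !big_split /= -!mulr_sumr !Ew_ind (Ew_sym (P i).2) (Ew_sym Vs).
ring.
Qed.

Lemma Nh_ind (a : 'rV[R[i]]_k) u : Nc (hv a u) = \sum_i Nc (a 0 i) * f ((u \in Sb i)%:R).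
Proof.
have [uV|uV] := boolP (u \in Vs).
  rewrite hv_out // /Nc mul0r big1 // => i _.
  by rewrite (negbTE (Vs_notin i uV)) rmorph0 mulr0.
have [i0 ui0] := notVs uV.
rewrite (hv_in a ui0) Nc_sigma // (bigD1 i0) //= big1 ?addr0.
  by rewrite ui0 rmorph1 mulr1.
move=> i ii0; have ui : u \notin Sb i.
  by apply: contra ii0 => ui; apply/eqP/(Sb_uniq ui ui0).
by rewrite (negbTE ui) rmorph0 mulr0.
Qed.

Lemma ratio_bound hs i : hs <= bip_ratio w P i ->
  2 * hs * vol w (Sb i) <= 4 * Ew w (P i).1 (P i).2 + Ew w (Sb i) Vs.
Proof.
have vpos : 0 < vol w (Sb i).
  have /set0Pn [u0 u0i] := hP3 i.
  rewrite /vol (bigD1 u0) //=; apply: (lt_le_trans (deg_pos u0)).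
  by rewrite lerDl sumr_ge0 // => v _; apply: ltW.
rewrite /bip_ratio -/(Sb i) -/Vs ler_pdivlMr // => h.
have := ler_wpM2l (ler0n R 2) h; rewrite mulrA => h2.
by apply: (le_trans h2); lra.
Qed.

Lemma quad_identity (h : V -> R[i]) :
  2 * (\sum_u h u * (h u)^* * f (deg w u) - \sum_u \sum_v h u * (h v)^* * f (w u v))
  = \sum_u \sum_v f (w u v) * Nc (h u - h v).
Proof.
have e : forall u v, f (w u v) * Nc (h u - h v) =
   f (w u v) * Nc (h u) - f (w u v) * (h u * (h v)^*)
   - f (w u v) * (h v * (h u)^*) + f (w u v) * Nc (h v).
  by move=> u v; rewrite /Nc (rmorphB Num.conj_op) /=; ring.
symmetry.
under eq_bigr => u _ do rewrite (eq_bigr _ (fun v _ => e u v)) big_split /= !sumrB.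
rewrite big_split /= !sumrB.
have eA : \sum_u \sum_v f (w u v) * Nc (h u) = \sum_u h u * (h u)^* * f (deg w u).
  apply: eq_bigr => u _; rewrite -mulr_suml /deg rmorph_sum /Nc mulrC //.
have eA' : \sum_u \sum_v f (w u v) * Nc (h v) = \sum_u h u * (h u)^* * f (deg w u).
  rewrite exchange_big /= -eA; apply: eq_bigr => u _; apply: eq_bigr => v _.
  by rewrite w_sym.
have eB : \sum_u \sum_v f (w u v) * (h u * (h v)^*) = \sum_u \sum_v h u * (h v)^* * f (w u v).
  by apply: eq_bigr => u _; apply: eq_bigr => v _; rewrite mulrC.
have eB' : \sum_u \sum_v f (w u v) * (h v * (h u)^*) = \sum_u \sum_v h u * (h v)^* * f (w u v).
  rewrite exchange_big /= -eB; apply: eq_bigr => u _; apply: eq_bigr => v _.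
  by rewrite w_sym.
rewrite eA eA' eB eB'; ring.
Qed.

Lemma graph_ineq (hs : R) (hhs : forall i, hs <= bip_ratio w P i) (a : 'rV[R[i]]_k) :
  f (2 * hs) * \sum_u hv a u * (hv a u)^* * f (deg w u) <=
  \sum_u hv a u * (hv a u)^* * f (deg w u)
   - \sum_u \sum_v hv a u * (hv a v)^* * f (w u v).
Proof using w_sym w_ge0 deg_pos hP.
have two : (0 : R[i]) < 2 by rewrite ltr0n.
rewrite -(ler_pM2l two) quad_identity.
have eL : 2 * (f (2 * hs) * \sum_u hv a u * (hv a u)^* * f (deg w u)) =
    \sum_i Nc (a 0 i) * f (2 * (2 * hs * vol w (Sb i))).
  rewrite (eq_bigr (fun u => Nc (hv a u) * f (deg w u))) //.
  under eq_bigr => u _ do rewrite Nh_ind mulr_suml.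
  rewrite exchange_big /= !mulr_sumr; apply: eq_bigr => i _.
  rewrite -vol_ind !rmorphM rmorph_nat rmorph_sum !mulr_sumr; apply: eq_bigr => u _.
  by rewrite rmorphM; ring.
rewrite eL.
apply: (@le_trans _ _ (\sum_u \sum_v f (w u v) * \sum_i Nc (a 0 i) * f (psi i u v))); last first.
  apply: ler_sum => u _; apply: ler_sum => v _; apply: ler_wpM2l; last exact: pw.
  by rewrite ler0c.
have eR : \sum_u \sum_v f (w u v) * \sum_i Nc (a 0 i) * f (psi i u v) =
   \sum_i Nc (a 0 i) * f (2 * (4 * Ew w (P i).1 (P i).2 + Ew w (Sb i) Vs)).
  under eq_bigr => u _ do under eq_bigr => v _ do rewrite mulr_sumr.
  under eq_bigr => u _ do rewrite exchange_big.
  rewrite exchange_big /=; apply: eq_bigr => i _.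
  rewrite -sum_psi rmorph_sum mulr_sumr; apply: eq_bigr => u _.
  rewrite rmorph_sum mulr_sumr; apply: eq_bigr => v _.
  by rewrite rmorphM; ring.
rewrite eR; apply: ler_sum => i _; apply: ler_wpM2l; first exact: Nc_ge0.
by rewrite lecR ler_wpM2l // ratio_bound.
Qed.

End Main.

Lemma foldr_max_in (R : realType) (x0 : R) (t : seq R) : foldr Num.max x0 t \in x0 :: t.
Proof.
elim: t => [|a t IH] /=; first by rewrite mem_seq1.
rewrite /Num.max; case: ifP => _.
  by move: IH; rewrite !inE => /orP[->|->]; rewrite ?orbT.
by rewrite !inE eqxx orbT.
Qed.

Lemma seqmax_in (R : realType) (s : seq R) : s != [::] -> seqmax s \in s.
Proof.
case: s => [//|a t] _; rewrite /seqmax /=.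
have := foldr_max_in a (a :: t); rewrite /= !inE.
by case/orP=> [/eqP ->|->]; rewrite ?eqxx ?orbT.
Qed.

Lemma seqmin_le (R : realType) (s : seq R) x : x \in s -> seqmin s <= x.
Proof.
rewrite /seqmin; elim: s (head 0 s) => [//|a t IH] x0 /=.
rewrite inE => /orP[/eqP ->|xt]; first by rewrite ge_min lexx.
by rewrite ge_min (IH x0 xt) orbT.
Qed.

Lemma exists_sb (R : realType) (V : finType) (w : V -> V -> R) k :
  (k <= #|V|)%N -> exists P : {ffun 'I_k -> {set V} * {set V}}, sub_bipartition P.
Proof.
move=> hk.
exists [ffun i => ([set (@enum_val V (mem predT) (widen_ord hk i))], set0)].
apply/andP; split; first (apply/andP; split).
- by apply/forallP => i; rewrite ffunE /= disjoints1 in_set0.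
- apply/forallP => i; apply/forallP => j; apply/implyP => ij.
  rewrite !ffunE /= !setU0 disjoints1 inE; apply: contra ij => /eqP.
  by move/enum_val_inj => /(congr1 val) /= /val_inj ->.
- by apply/forallP => i; rewrite ffunE /= setU0; apply/set0Pn; exists (enum_val (widen_ord hk i)); rewrite inE.
Qed.

Local Open Scope ring_scope.

Theorem theorem4p1 (R : realType) (V : finType) (w : V -> V -> R)
  (w_sym : forall u v, w u v = w v u)
  (w_ge0 : forall u v, 0 <= w u v)
  (w_loop : forall u, w u u = 0)
  (deg_pos : forall u, 0 < deg w u)
  (s : seq R) (hs : eigenvalues_sorted w s)
  (k : nat) (hk1 : (1 <= k)%N) (hkN : (k <= #|V|)%N) :
  s`_(#|V| - k) >= 2 * hstar w k.
Proof.
case: hs => ssize ssort schar.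
have [P [hP Ph]] : exists P : {ffun 'I_k -> {set V} * {set V}}, sub_bipartition P /\ hstar w k = bip_value w P.
  rewrite /hstar; set L := (X in seqmax X).
  have : L != [::].
    have [P0 hP0] := exists_sb w hkN.
    apply/eqP => L0; have : bip_value w P0 \in L by rewrite map_f // mem_enum.
    by rewrite L0.
  move/seqmax_in => /mapP [P]; rewrite mem_enum => hP ->.
  by exists P.
have hhs : forall i, hstar w k <= bip_ratio w P i.
  by move=> i; rewrite Ph; apply: seqmin_le; rewrite map_f // mem_enum.
set c := 2 * hstar w k.
set X := spectral_diag (Mc w).
have charM : char_poly (Mc w) = \prod_(x <- s) ('X - (real_complex R x)%:P).
  rewrite /Mc -map_char_poly (B0_char w_sym w_ge0 deg_pos) schar rmorph_prod.
  by apply: eq_bigr => x _; rewrite /= map_polyXsubC.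
have charX : char_poly (Mc w) = \prod_(j < #|V|) ('X - (X 0 j)%:P).
  have /orthomx_spectralP HM := Mc_normal w_sym w_ge0 deg_pos.
  rewrite {1}HM char_poly_conj ?mulVmx ?spectral_unit // char_poly_trig ?diag_mx_is_trig //.
  by apply: eq_bigr => j _; rewrite mxE eqxx mulr1n.
have pe : perm_eq [seq X 0 j | j <- index_enum 'I_#|V|] [seq real_complex R x | x <- s].
  by apply: prod_XsubC_eq; rewrite !big_map -charM charX.
have cnt : count (fun x => x < c) s = #|[set j | (X ord0 j < real_complex R c)%R]|.
  rewrite cardsE cardE /enum_mem size_filter.
  have -> : count (fun x => x < c) s = count (fun z => z < real_complex R c) [seq real_complex R x | x <- s].
    by rewrite count_map; apply: eq_count => x /=; rewrite ltcR.
  rewrite -(permP pe) count_map.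
  rewrite [index_enum _]unlock; by apply: eq_count => j.
have Hq : forall a : 'rV_k, real_complex R c * ((a *m Gm w P) *m (a *m Gm w P) ^t*) 0 0
                    <= ((a *m Gm w P) *m Mc w *m (a *m Gm w P) ^t*) 0 0.
  by move=> a; rewrite (quad1 w_sym w_ge0 deg_pos hP) (quadM w_sym w_ge0 deg_pos hP); apply: graph_ineq.
have := specA (Mc_normal w_sym w_ge0 deg_pos) (Gm_free w_sym w_ge0 deg_pos hP) Hq.
rewrite -/X -cnt => hcnt.
rewrite (nth_count_ge) //.
have e : count (< c) s = count (fun x => x < c) s by apply: eq_count.
rewrite ssize e; apply/andP; split; lia.
Qed.
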